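(* Let $1\le m\le N$ be integers and let $(u_n)$ be a sequence of finite (real-valued) functions on $\Lambda^m$. Then there exists a finite function $U:\Lambda^N\to\mathbb R$ such that $G_{N,m}u_n\to U$ $d^Nx$-a.e. on $\Lambda^N$ if and only if there exists a finite function $u:\Lambda^m\to\mathbb R$ such that $u_n\to u$ $d^mx$-a.e. on $\Lambda^m$.
   Context: $(\Lambda;dx)$ is a complete $\sigma$-finite measure space with non-zero measure $dx$; for $k\in\mathbb N$, $d^kx$ denotes the completion of the product measure $dx^{\otimes k}$ on $\Lambda^k$, and ''a.e.'' on $\Lambda^k$ refers to $d^kx$. For integers $1\le m\le N$ and a function $u:\Lambda^m\to\mathbb R$ (not assumed symmetric or measurable), the generalized $N$-mean of order $m$ with kernel $u$ is $$(G_{N,m}u)(x_1,\dots,x_N)=\binom{N}{m}^{-1}\sum_{1\le i_1<\cdots<i_m\le N}u(x_{i_1},\dots,x_{i_m}).$$ *)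

(* Defs.v *)
From HB Require Import structures.
From mathcomp Require Import all_boot all_order all_algebra.
From mathcomp Require Import all_classical all_reals all_analysis.
Set Implicit Arguments. Unset Strict Implicit. Unset Printing Implicit Defensive.
Import Order.TTheory GRing.Theory Num.Theory numFieldNormedType.Exports.
Local Open Scope classical_set_scope.
Local Open Scope ring_scope.

(* d^k x-null sets of Lambda^k (= k.-tuple T): sets of outer product measure
   zero, i.e. coverable by countably many measurable rectangles
   B j 0 x ... x B j (k-1) with total product measure < e, for every e > 0.
   These are exactly the null sets of the completion of mu^{(x) k}. *)
Definition prod_null {d} {T : measurableType d} {R : realType}
  (mu : {measure set T -> \bar R}) (k : nat) (A : set (k.-tuple T)) : Prop :=
  forall e : R, 0 < e -> exists B : nat -> 'I_k -> set T,
    (forall j i, measurable (B j i)) /\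
    A `<=` \bigcup_j [set x | forall i, B j i (tnth x i)] /\
    (\sum_(j <oo) \prod_(i < k) mu (B j i) < e%:E)%E.

Definition ae_prod {d} {T : measurableType d} {R : realType}
  (mu : {measure set T -> \bar R}) (k : nat) (P : k.-tuple T -> Prop) : Prop :=
  exists E : set (k.-tuple T), prod_null mu E /\ forall x, ~ E x -> P x.

Definition incr_idx (m N : nat) (f : {ffun 'I_m -> 'I_N}) : bool :=
  [forall i : 'I_m, forall j : 'I_m, (i < j)%N ==> (f i < f j)%N].

Definition Gmean {T : Type} {R : realType} (N m : nat)
  (u : m.-tuple T -> R) (x : N.-tuple T) : R :=
  ('C(N, m)%:R)^-1 *
  \sum_(f : {ffun 'I_m -> 'I_N} | incr_idx f) u [tuple tnth x (f i) | i < m].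

(* Main.v *)
Require Import Defs.
From HB Require Import structures.
From mathcomp Require Import all_boot all_order all_algebra.
From mathcomp Require Import all_classical all_reals all_analysis.
From mathcomp Require Import measurable_realfun.
Import Order.TTheory GRing.Theory Num.Theory numFieldNormedType.Exports.
Local Open Scope classical_set_scope.
Local Open Scope ring_scope.
Definition Cv {R : realType} (s : nat -> R) := cvg (s @ \oo).

Lemma Cv_ext {R : realType} (s t : nat -> R) : (forall n, s n = t n) -> Cv s -> Cv t.
Proof. by move=> e; rewrite /Cv (_ : s = t)//; apply/funext. Qed.

Lemma Cv_cst {R : realType} (c : R) : Cv (fun=> c).
Proof. exact: is_cvg_cst. Qed.

Lemma Cv_add {R : realType} (s t : nat -> R) : Cv s -> Cv t -> Cv (fun n => s n + t n).
Proof. by move=> hs ht; apply: is_cvgD. Qed.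

Lemma Cv_sub {R : realType} (s t : nat -> R) : Cv s -> Cv t -> Cv (fun n => s n - t n).
Proof. by move=> hs ht; apply: is_cvgB. Qed.

Lemma Cv_scale {R : realType} (c : R) (s : nat -> R) : Cv s -> Cv (fun n => c * s n).
Proof. move=> hs; exact: (is_cvgZ (is_cvg_cst c) hs). Qed.

Lemma Cv_sum {R : realType} (I : Type) (r : seq I) (P : pred I) (f : I -> nat -> R) :
  (forall i, P i -> Cv (f i)) -> Cv (fun n => \sum_(i <- r | P i) f i n).
Proof.
move=> h; elim: r => [|i r IH].
  by apply: (@Cv_ext _ (fun=> 0)) => [n|]; [rewrite big_nil|exact: Cv_cst].
case Pi: (P i).
  apply: (@Cv_ext _ (fun n => f i n + \sum_(j <- r | P j) f j n)).
    by move=> n; rewrite big_cons Pi.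
  exact: Cv_add (h _ Pi) IH.
by apply: Cv_ext IH => n; rewrite big_cons Pi.
Qed.

Lemma double_count {R : realType} (I : finType) (X : {set I}) (j : nat) (f : {set I} -> R) :
  \sum_(q in X) \sum_(S : {set I} | (S \subset X :\ q) && (#|S| == j)) f S
  = \sum_(S : {set I} | (S \subset X) && (#|S| == j)) (#|X| - j)%:R * f S.
Proof.
under eq_bigr do rewrite big_mkcond /=.
rewrite exchange_big /= [RHS]big_mkcond /=; apply: eq_bigr => S _.
under eq_bigr do rewrite subsetD1.
case: (boolP ((S \subset X) && (#|S| == j))) => [/andP[SX /eqP Sj]|nS].
- rewrite -big_mkcondr /=.
  under eq_bigl do rewrite SX /=.
  rewrite sumr_const -[f S *+ _]mulr_natl; congr (_ * _).
  have -> : #|(fun q => [&& q \in X, q \notin S & #|S| == j])| = #|X :\: S|.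
    by apply: eq_card => q; rewrite [in RHS]inE -topredE /= Sj eqxx andbT andbC.
  by rewrite cardsD; move/finset.setIidPr: SX => ->; rewrite Sj.
- apply: big1 => q _; case: ifP => // h; exfalso; move/negP: nS; apply.
  by move: h; case/andP => /andP[-> _] ->.
Qed.

Lemma split_sum {R : realType} (I : finType) (p : I) (Y : {set I}) (k : nat) (f : {set I} -> R) :
  p \notin Y ->
  \sum_(S : {set I} | (S \subset p |: Y) && (#|S| == k.+1)) f S
  = \sum_(Q : {set I} | (Q \subset Y) && (#|Q| == k)) f (p |: Q)
    + \sum_(S : {set I} | (S \subset Y) && (#|S| == k.+1)) f S.
Proof.
move=> pY; rewrite [LHS](bigID (fun S : {set I} => p \in S)) /=; congr (_ + _).
- rewrite (reindex_onto (fun Q => p |: Q) (fun S => S :\ p)) /=; last first.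
    by move=> S /andP[_ pS]; rewrite finset.setD1K.
  apply: eq_bigl => Q; rewrite setU11 andbT.
  case: (boolP (p \in Q)) => pQ.
  + have -> : p |: Q = Q by apply/finset.setUidPr; rewrite finset.sub1set.
    have -> : (Q :\ p == Q) = false.
      by apply/negbTE/eqP => e; move: pQ; rewrite -e setD11.
    rewrite !andbF; symmetry; apply/negbTE; apply/negP => /andP[QY _].
    by move: pY; rewrite (fintype.subsetP QY _ pQ).
  + rewrite finset.setU1K // eqxx andbT cardsU1 pQ add1n eqSS.
    congr (_ && _); apply/idP/idP => [h|h].
    * have : Q \subset (p |: Y) :\ p by rewrite subsetD1 pQ andbT (fintype.subset_trans (finset.subsetU1 p Q) h).
      by rewrite finset.setU1K.
    * exact: finset.setUS.
- apply: eq_bigl => S; case: (boolP (p \in S)) => pS; rewrite ?andbF ?andbT //=.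
  + symmetry; apply/negbTE; apply/negP => /andP[SY _].
    by move: pY; rewrite (fintype.subsetP SY _ pS).
  + congr (_ && _); apply/idP/idP => [h|h].
    * have : S \subset (p |: Y) :\ p by rewrite subsetD1 pS h.
      by rewrite finset.setU1K.
    * exact: (fintype.subset_trans h (finset.subsetU1 p Y)).
Qed.

Lemma exists_subset (I : finType) (D : {set I}) (N : nat) :
  (N <= #|D|)%N -> exists W : {set I}, W \subset D /\ #|W| = N.
Proof.
move=> hN; exists [set x in take N (enum D)]; split.
- apply/fintype.subsetP => x; rewrite inE => /mem_take; by rewrite mem_enum.
- rewrite cardsE (card_uniqP _); last by apply: take_uniq; exact: enum_uniq.
  by rewrite size_takel // -cardE.
Qed.

Lemma alg_inj {R : realType} (I : finType) (N : nat) : forall m (D : {set I}) (a : {set I} -> nat -> R),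
  (m <= N)%N -> (m + N <= #|D|)%N ->
  (forall W : {set I}, W \subset D -> #|W| = N ->
     Cv (fun n => \sum_(S : {set I} | (S \subset W) && (#|S| == m)) a S n)) ->
  forall S : {set I}, S \subset D -> #|S| = m -> Cv (a S).
Proof.
elim=> [|m IH] D a hmN hD hW S hSD hS.
- have [W [WD WN]] := @exists_subset _ D N hD.
  move/eqP: hS; rewrite cards_eq0 => /eqP ->.
  apply: Cv_ext (hW W WD WN) => n.
  rewrite (big_pred1 finset.set0) // => S'; rewrite cards_eq0 /=.
  case: (boolP (S' == finset.set0)) => [/eqP ->|]; by rewrite ?finset.sub0set ?andbF.
- have : (0 < #|S|)%N by rewrite hS.
  rewrite card_gt0 => /set0Pn [p pS].
  have pD : p \in D by apply: (fintype.subsetP hSD).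
  pose b (Q : {set I}) := a (p |: Q).
  have hSp : S = p |: (S :\ p) by rewrite finset.setD1K.
  rewrite hSp; apply: (IH (D :\ p) b) => //.
  + exact: ltnW.
  + by move: hD; rewrite (cardsD1 p D) pD add1n addSn ltnS.
  + move=> X XD XN.
    have XD' : X \subset D by apply: (fintype.subset_trans XD); exact: subsetDl.
    have pX : p \notin X.
      by apply/negP => /(fintype.subsetP XD); rewrite setD11.
    have h2 := hW X XD' XN.
    have hq : forall q, q \in X -> Cv (fun n =>
        \sum_(Q : {set I} | (Q \subset X :\ q) && (#|Q| == m)) b Q n
        + \sum_(S' : {set I} | (S' \subset X :\ q) && (#|S'| == m.+1)) a S' n).
      move=> q qX.
      have pXq : p \notin X :\ q.
        by apply/negP => /(fintype.subsetP (subsetDl X [set q])); rewrite (negbTE pX).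
      have W1 : p |: (X :\ q) \subset D.
        rewrite finset.subUset finset.sub1set pD /=.
        apply: (fintype.subset_trans (subsetDl X [set q])); exact XD'.
      have W2 : #|p |: (X :\ q)| = N.
        by rewrite cardsU1 pXq -XN (cardsD1 q X) qX.
      apply: Cv_ext (hW _ W1 W2) => n.
      by rewrite split_sum.
    have h1 := @Cv_sum _ _ (index_enum _) (fun q => q \in X) (fun q => fun n =>
        \sum_(Q : {set I} | (Q \subset X :\ q) && (#|Q| == m)) b Q n
        + \sum_(S' : {set I} | (S' \subset X :\ q) && (#|S'| == m.+1)) a S' n) hq.
    have h3 : forall n, \sum_(q in X) (\sum_(Q : {set I} | (Q \subset X :\ q) && (#|Q| == m)) b Q n
        + \sum_(S' : {set I} | (S' \subset X :\ q) && (#|S'| == m.+1)) a S' n)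
      = (N - m)%:R * \sum_(Q : {set I} | (Q \subset X) && (#|Q| == m)) b Q n
        + (N - m.+1)%:R * \sum_(S' : {set I} | (S' \subset X) && (#|S'| == m.+1)) a S' n.
      move=> n; rewrite big_split /= !double_count !mulr_sumr XN; done.
    have hNm : (N - m)%:R != 0 :> R by rewrite pnatr_eq0 subn_eq0 -ltnNge.
    apply: (@Cv_ext _ (fun n => (N - m)%:R^-1 * ((\sum_(q in X) (\sum_(Q : {set I} | (Q \subset X :\ q) && (#|Q| == m)) b Q n
        + \sum_(S' : {set I} | (S' \subset X :\ q) && (#|S'| == m.+1)) a S' n)) - (N - m.+1)%:R * \sum_(S' : {set I} | (S' \subset X) && (#|S'| == m.+1)) a S' n))).
      by move=> n; rewrite h3 addrK mulrA mulVf // mul1r.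
    apply: Cv_scale; apply: Cv_sub => //; exact: Cv_scale.
  + exact: finset.setSD.
  + by move: hS; rewrite (cardsD1 p S) pS add1n => -[].
Qed.

Set Implicit Arguments. Unset Strict Implicit.

Lemma ae_mono d (T : measurableType d) (R : realType) (mu : {measure set T -> \bar R})
  (k : nat) (P Q : k.-tuple T -> Prop) :
  ae_prod mu P -> (forall x, P x -> Q x) -> ae_prod mu Q.
Proof. by move=> [E [hE hP]] hPQ; exists E; split => // x /hP /hPQ. Qed.

Lemma null_sub d (T : measurableType d) (R : realType) (mu : {measure set T -> \bar R})
  (k : nat) (A B : set (k.-tuple T)) : prod_null mu B -> A `<=` B -> prod_null mu A.
Proof.
move=> hB AB e e0; have [C [hC1 [hC2 hC3]]] := hB e e0.
by exists C; split => //; split => //; apply: subset_trans hC2.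
Qed.

Lemma null_bigcup d (T : measurableType d) (R : realType) (mu : {measure set T -> \bar R})
  (k : nat) (E : nat -> set (k.-tuple T)) :
  (forall l, prod_null mu (E l)) -> prod_null mu (\bigcup_l E l).
Proof.
move=> hE e e0.
pose P (l : nat) (B : nat -> 'I_k -> set T) := (forall j i, measurable (B j i)) /\
    E l `<=` \bigcup_j [set x | forall i, B j i (tnth x i)] /\
    (\sum_(j <oo) \prod_(i < k) mu (B j i) < ((e / 2) / (2 ^ l.+1)%:R)%:E)%E.
have [G PG] : {G : nat -> nat -> 'I_k -> set T & forall l, P l (G l)}.
  apply: (@choice _ _ P) => l; apply: hE.
  by rewrite divr_gt0 // ?divr_gt0 // ltr0n expn_gt0.
pose c (p : nat * nat) := (\prod_(i < k) mu (G p.1 p.2 i))%E.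
have c0 p : (0 <= c p)%E by apply: prode_ge0 => i _.
have /card_esym/ppcard_eqP[f] := card_nat2.
exists (fun n => G (f n).1 (f n).2); split; first by move=> j i; exact: (PG _).1.
split.
  move=> x [l _ /(PG l).2.1 [j _ hj]]; exists (f^-1%FUN (l, j)) => //=.
  by rewrite invK ?inE.
apply: (@le_lt_trans _ _ (e / 2)%:E); last by rewrite lte_fin ltr_pdivrMr // ltr_pMr // ltr1n.
have -> : (\sum_(n <oo) \prod_(i < k) mu (G (f n).1 (f n).2 i) = \esum_(i in setT) c i)%E.
  rewrite -(esum_pred_image c _ xpredT) ?[fun=> _]set_true//.
  by rewrite image_eq.
rewrite (_ : esum _ _ = \sum_(i <oo) \sum_(j <oo ) c (i, j))%E; last first.
  pose J : nat -> set (nat * nat) := fun i => [set (i, j) | j in setT].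
  rewrite (_ : setT = \bigcup_k J k); last first.
    by rewrite predeqE => -[a b]; split => // _; exists a => //; exists b.
  rewrite esum_bigcupT /=; last 2 first.
    - apply/trivIsetP => i j _ _ ij.
      rewrite predeqE => -[n m] /=; split => //= -[] [_] _ [<-{n} _].
      by move=> [m' _] [] /esym/eqP; rewrite (negbTE ij).
    - by move=> [n m]; exact: c0.
  rewrite -(image_id [set: nat]) -fun_true esum_pred_image//; last first.
    by move=> n _; exact: esum_ge0.
  apply: eq_eseriesr => /= j _.
  rewrite -(esum_pred_image c (pair j) predT)//=; last first.
    by move=> ? ? _ _; exact: (@can_inj _ _ _ snd).
  by congr esum; rewrite predeqE => -[a b]; split; move=> [i _ <-]; exists i.
apply: le_trans (epsilon_trick0 xpredT _); last by rewrite divr_ge0 // ltW.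
by apply: lee_nneseries => [n _ _|n _]; [apply: nneseries_ge0 => j _ _; exact: c0|exact: ltW (PG n).2.2].
Qed.

Lemma ae_true d (T : measurableType d) (R : realType) (mu : {measure set T -> \bar R})
  (k : nat) : (0 < k)%N -> ae_prod mu (fun _ : k.-tuple T => True).
Proof.
case: k => // k _; exists set0; split => // e e0.
exists (fun _ _ => set0); split; first by move=> *; exact: measurable0.
split; first by move=> x [].
by rewrite big_ord_recl measure0 mul0e eseries0 // lte_fin.
Qed.

Lemma ae_and d (T : measurableType d) (R : realType) (mu : {measure set T -> \bar R})
  (k : nat) (P Q : k.-tuple T -> Prop) :
  ae_prod mu P -> ae_prod mu Q -> ae_prod mu (fun x => P x /\ Q x).
Proof.
move=> [E1 [h1 hP]] [E2 [h2 hQ]].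
exists (\bigcup_l (if l == 0%N then E1 else E2)); split.
  by apply: null_bigcup => l; case: (l == 0%N).
move=> x hx; split.
  by apply: hP => h; apply: hx; exists 0%N.
by apply: hQ => h; apply: hx; exists 1%N.
Qed.

Lemma ae_all d (T : measurableType d) (R : realType) (mu : {measure set T -> \bar R})
  (k : nat) (I : finType) (P : I -> k.-tuple T -> Prop) : (0 < k)%N ->
  (forall i, ae_prod mu (P i)) -> ae_prod mu (fun x => forall i, P i x).
Proof.
move=> k0 hP.
suff : ae_prod mu (fun x => forall i, i \in enum I -> P i x).
  move=> h; eapply ae_mono; first exact h.
  by move=> x hx i; apply: hx; rewrite mem_enum.
elim: (enum I) => [|i s IH].
  by eapply ae_mono; first exact (ae_true mu k0).
eapply ae_mono; first exact (ae_and (hP i) IH).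
move=> x [h1 h2] j.
by rewrite inE => /orP[/eqP ->|/h2].
Qed.

Definition del (T : Type) (k : nat) (p : 'I_k.+1) (x : k.+1.-tuple T) : k.-tuple T :=
  [tuple tnth x (lift p i) | i < k].

Lemma ae_del d (T : measurableType d) (R : realType) (mu : {measure set T -> \bar R})
  (mu_sfin : sigma_finite [set: T] mu) (k : nat) (p : 'I_k.+1) (P : k.-tuple T -> Prop) :
  ae_prod mu P -> ae_prod mu (fun x => P (del p x)).
Proof.
move=> [E [hE hP]].
have [F FT hF] := mu_sfin.
exists (\bigcup_l [set x | E (del p x) /\ F l (tnth x p)]); split; last first.
  move=> x hx; apply: hP => hE'; apply: hx.
  have : [set: T] (tnth x p) by [].
  rewrite FT => -[l _ hl]; by exists l.
apply: null_bigcup => l e e0.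
have [mF Ffin] := hF l.
pose c := fine (mu (F l)).
have c0 : 0 <= c by apply: fine_ge0; exact: measure_ge0.
have cE : (c%:E = mu (F l))%E.
  by rewrite fineK // ge0_fin_numE // measure_ge0.
have e'0 : 0 < e / (c + 1) by rewrite divr_gt0 // ltr_wpDl.
have [B [mB [EB sB]]] := hE _ e'0.
pose B' := fun j i => if unlift p i is Some i' then B j i' else F l.
exists B'; split.
  by move=> j i; rewrite /B'; case: (unlift p i).
split.
  move=> x [/EB [j _ hj] hx]; exists j => // i.
  rewrite /B'; case: unliftP => [i' ->|->]; last by [].
  by have := hj i'; rewrite /del tnth_map tnth_ord_tuple.
have hp : forall j, (\prod_(i < k.+1) mu (B' j i) = c%:E * \prod_(i < k) mu (B j i))%E.
  move=> j; rewrite (bigD1_ord p) //= /B' unlift_none cE; congr (_ * _)%E.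
  by apply: eq_bigr => i _; rewrite liftK.
rewrite (eq_eseriesr (fun j _ => hp j)).
rewrite nneseriesZl; last by move=> j _; apply: prode_ge0 => i _.
apply: (@le_lt_trans _ _ (c%:E * (e / (c + 1))%:E)%E).
  by apply: lee_wpmul2l; [rewrite lee_fin|exact: ltW].
rewrite -EFinM lte_fin mulrA ltr_pdivrMr ?ltr_wpDl // mulrC ltr_pM2l //.
by rewrite ltrDl.
Qed.

Definition incrf (k M : nat) (g : 'I_k -> 'I_M) :=
  forall i j : 'I_k, (i < j)%N -> (g i < g j)%N.

Lemma incr_id (k : nat) (g : 'I_k -> 'I_k) : incrf g -> forall i, g i = i.
Proof.
move=> hg.
have ge : forall n (Hn : (n < k)%N), (n <= g (Ordinal Hn))%N.
  elim=> [//|n IH] Hn.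
  have Hn' : (n < k)%N by exact: ltnW.
  have := hg (Ordinal Hn') (Ordinal Hn) (ltnSn n).
  by move/(leq_ltn_trans (IH Hn')).
have le : forall t n (Hn : (n < k)%N), (k - n.+1 = t)%N -> (g (Ordinal Hn) <= n)%N.
  elim=> [|t IH] n Hn ht.
    have := ltn_ord (g (Ordinal Hn)); move/eqP: ht; rewrite subn_eq0 => hk h.
    by rewrite -ltnS (leq_trans h hk).
  have Hn1 : (n.+1 < k)%N by rewrite -subn_gt0 ht.
  have := hg (Ordinal Hn) (Ordinal Hn1) (ltnSn n).
  have := IH n.+1 Hn1 (ltac:(by rewrite subnS ht)).
  by move=> h1 h2; rewrite -ltnS (leq_trans h2 h1).
move=> [i Hi]; apply: val_inj => /=; apply/eqP; rewrite eqn_leq ge andbT.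
exact: (le _ i Hi erefl).
Qed.

Definition subt (T : Type) (k M : nat) (g : 'I_k -> 'I_M) (x : M.-tuple T) : k.-tuple T :=
  [tuple tnth x (g i) | i < k].

Lemma ae_sub d (T : measurableType d) (R : realType) (mu : {measure set T -> \bar R})
  (mu_sfin : sigma_finite [set: T] mu) (k : nat) (P : k.-tuple T -> Prop) :
  ae_prod mu P -> forall d' (g : 'I_k -> 'I_(d' + k)), incrf g ->
  ae_prod mu (fun x => P (subt g x)).
Proof.
move=> hP; elim=> [|d' IH] g hg.
  eapply ae_mono; first exact hP.
  move=> x; congr P; apply: eq_from_tnth => i.
  by rewrite /subt tnth_map tnth_ord_tuple (incr_id hg).
have ginj : injective g.
  move=> i j eij; apply/eqP; case: (ltngtP i j) => [h|h|/val_inj -> //].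
  - by have := hg _ _ h; rewrite eij ltnn.
  - by have := hg _ _ h; rewrite eij ltnn.
have [p hp] : exists p, p \notin codom g.
  apply/existsP; rewrite -negb_forall; apply/negP => /forallP hall.
  have : (#|'I_(d'.+1 + k)| <= #|codom g|)%N.
    by apply: subset_leq_card; apply/fintype.subsetP => p _; exact: hall.
  by rewrite card_codom // !card_ord addSn ltnNge leq_addl.
pose g' (i : 'I_k) : 'I_(d' + k) := odflt (widen_ord (leq_addl d' k) i) (unlift p (g i)).
have hg' : forall i, lift p (g' i) = g i.
  move=> i; rewrite /g'; case: unliftP => [j -> //|e].
  by move: hp; rewrite -e codom_f.
have incr' : incrf g'.
  move=> i j hij; have := hg _ _ hij; rewrite -!hg' /=.
  by rewrite ltnNge leq_bump2 -ltnNge.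
have := ae_del mu_sfin p (IH g' incr').
move=> h; eapply ae_mono; first exact h.
move=> x; congr P; apply: eq_from_tnth => i.
by rewrite /subt /del !tnth_map !tnth_ord_tuple hg'.
Qed.

Lemma pos_below d (T : measurableType d) (R : realType) (mu : {measure set T -> \bar R}) :
  mu [set: T] != 0%E -> exists r : R, 0 < r /\ (r%:E <= mu [set: T])%E.
Proof.
move=> h0; have hge : (0 <= mu [set: T])%E by exact: measure_ge0.
case E: (mu [set: T]) h0 => [r| |] // h0.
- move: hge; rewrite E lee_fin => hr.
  exists r; split => //; rewrite lt_def hr andbT.
  by apply: contra h0 => /eqP ->.
- by exists 1; split => //; rewrite leey.
- by move: hge; rewrite E.
Qed.

Lemma ae_droplast d (T : measurableType d) (R : realType) (mu : {measure set T -> \bar R})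
  (mu_nz : mu [set: T] != 0%E) (k : nat) (Q : k.-tuple T -> Prop) : (0 < k)%N ->
  ae_prod mu (fun x : k.+1.-tuple T => Q (del ord_max x)) -> ae_prod mu Q.
Proof.
move=> k0 [E [hE hQ]].
exists [set w | ~ Q w]; split; last by move=> w /= /contrapT.
move=> eps eps0.
have [r [r0 rmu]] := pos_below mu_nz.
have [B [mB [EB sB]]] := hE _ (mulr_gt0 eps0 r0).
pose rho j := (\prod_(i < k) mu (B j (lift ord_max i)))%E.
pose C j := B j ord_max.
have rho0 j : (0 <= rho j)%E by apply: prode_ge0 => i _.
have hsplit j : (\prod_(i < k.+1) mu (B j i) = mu (C j) * rho j)%E.
  by rewrite (bigD1_ord ord_max).
pose f : nat -> T -> \bar R := fun (j : nat) (t : T) => (rho j * (\1_(C j) t)%:E)%E.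
have mf j : measurable_fun [set: T] (f j).
  rewrite /f; apply: measurable_funeM.
  by have /measurable_EFinP := @measurable_indic _ _ R [set: T] (C j) (mB j ord_max).
have f0 j t : [set: T] t -> (0 <= f j t)%E.
  by move=> _; apply: mule_ge0; [exact: rho0|rewrite lee_fin indicE ler0n].
have hint : (\int[mu]_(t in [set: T]) (\sum_(j <oo) f j t) < (eps * r)%:E)%E.
  rewrite integral_nneseries //.
  apply: le_lt_trans sB; apply: lee_nneseries => [j _ _|j _].
    by apply: integral_ge0 => t _; exact: f0.
  rewrite ge0_integralZl //.
  - rewrite integral_indic //. rewrite (_ : _ `&` _ = C j); last exact: setIT.
    by rewrite hsplit muleC.
  - exact: mB.
  - by have /measurable_EFinP := @measurable_indic _ _ R [set: T] (C j) (mB j ord_max).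
have [t ht] : exists t, (\sum_(j <oo) f j t < eps%:E)%E.
  apply/not_existsP => hall.
  have : (\int[mu]_(t in [set: T]) (cst eps%:E t) <= \int[mu]_(t in [set: T]) (\sum_(j <oo) f j t))%E.
    apply: ge0_le_integral => //.
    - by move=> t _; rewrite /cst lee_fin ltW.
    - exact: (@ge0_emeasurable_sum _ T R [set: T] f xpredT (fun k x _ _ => f0 k x I) (fun k _ => mf k)).
    - by move=> t _; rewrite /cst leNgt; apply/negP => h; exact: (hall t h).
  rewrite integral_cst // => hle.
  have : ((eps * r)%:E <= eps%:E * mu [set: T])%E.
    by rewrite EFinM lee_pmul2l // lte_fin.
  move=> h2; have := lt_le_trans hint (le_trans h2 hle).
  by rewrite ltxx.
pose B' j (i : 'I_k) := if `[< C j t >] then B j (lift ord_max i) else set0.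
exists B'; split.
  by move=> j i; rewrite /B'; case: ifP => // _; exact: measurable0.
split.
  move=> w /= hw.
  pose x : k.+1.-tuple T :=
    [tuple (if unlift ord_max i is Some i' then tnth w i' else t) | i < k.+1].
  have hdel : del ord_max x = w.
    by apply: eq_from_tnth => i; rewrite /del !tnth_map !tnth_ord_tuple liftK.
  have Ex : E x.
    by apply: contrapT => nE; apply: hw; rewrite -hdel; exact: hQ.
  have [j _ hj] := EB _ Ex.
  have Cjt : C j t.
    by have := hj ord_max; rewrite /x tnth_map tnth_ord_tuple unlift_none.
  exists j => // i; rewrite /B' asboolT //.
  by have := hj (lift ord_max i); rewrite /x tnth_map tnth_ord_tuple liftK.
apply: le_lt_trans ht; rewrite le_eqVlt; apply/orP; left; apply/eqP.
apply: eq_eseriesr => j _; rewrite /B' /f indicE.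
case: (pselect (C j t)) => hc.
  by rewrite asboolT // mem_set // mule1.
rewrite asboolF // memNset // mule0.
by move: (k0); case: (k) => // k' _; rewrite big_ord_recl measure0 mul0e.
Qed.

Lemma sorted_enum_set (M : nat) (A : {set 'I_M}) : sorted ltn (map val (enum A)).
Proof.
rewrite -[enum _](eq_filter (mem_enum _)).
rewrite -(eq_filter (mem_map val_inj _)) -filter_map.
by rewrite (sorted_filter ltn_trans) // unlock val_ord_enum iota_ltn_sorted.
Qed.

Lemma nth_enum_lt (M : nat) (x0 : 'I_M) (A : {set 'I_M}) (i j : nat) :
  (i < j)%N -> (j < #|A|)%N -> (nth x0 (enum A) i < nth x0 (enum A) j)%N.
Proof.
move=> ij jA; have iA : (i < #|A|)%N by exact: ltn_trans jA.
rewrite cardE in iA jA.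
rewrite -!(nth_map x0 (val x0)) //.
apply: (sorted_ltn_nth ltn_trans) => //; first exact: sorted_enum_set.
  by rewrite inE size_map.
by rewrite inE size_map.
Qed.

Lemma index_enum_lt (M : nat) (A : {set 'I_M}) (a b : 'I_M) :
  a \in A -> b \in A -> (a < b)%N -> (index a (enum A) < index b (enum A))%N.
Proof.
move=> aA bA ab; rewrite ltnNge leq_eqVlt; apply/negP => /orP[/eqP e|h].
  have : nth a (enum A) (index b (enum A)) = nth a (enum A) (index a (enum A)) by rewrite e.
  by rewrite !nth_index ?mem_enum // => ebA; move: ab; rewrite ebA ltnn.
have aA' : (index a (enum A) < #|A|)%N by rewrite cardE index_mem mem_enum.
have := @nth_enum_lt M a A _ _ h aA'; rewrite !nth_index ?mem_enum // => ba.
by move: (ltn_trans ab ba); rewrite ltnn.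
Qed.

Lemma incr_inj (m M : nat) (h : 'I_m -> 'I_M) : incrf h -> injective h.
Proof.
move=> hh i j eij; apply/eqP; case: (ltngtP i j) => [c|c|/val_inj -> //].
- by have := hh _ _ c; rewrite eij ltnn.
- by have := hh _ _ c; rewrite eij ltnn.
Qed.

Lemma nth_enum_image (m M : nat) (x0 : 'I_M) (h : 'I_m -> 'I_M) : incrf h ->
  forall i : 'I_m, nth x0 (enum [set h j | j : 'I_m]) i = h i.
Proof.
move=> hh.
have hinj : injective h.
  move=> i j eij; apply/eqP; case: (ltngtP i j) => [c|c|/val_inj -> //].
  - by have := hh _ _ c; rewrite eij ltnn.
  - by have := hh _ _ c; rewrite eij ltnn.
have e : map val (enum [set h j | j : 'I_m]) = map val (map h (enum 'I_m)).
  apply: (irr_sorted_eq ltn_trans ltnn); first exact: sorted_enum_set.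
    rewrite -map_comp sorted_map.
    have := iota_ltn_sorted 0 m; rewrite -val_enum_ord sorted_map.
    by apply: sub_sorted => i j /= c; exact: hh.
  move=> y; apply/mapP/mapP => [[z zA ->]|[z zA ->]]; exists z => //.
    move: zA; rewrite mem_enum => /imsetP [j _ ->]; apply: map_f; exact: mem_enum.
  move/mapP: zA => [j _ ->]; rewrite mem_enum; apply/imsetP; exists j => //.
have sz : size (enum [set h j | j : 'I_m]) = m by rewrite -cardE card_imset // card_ord.
move=> i; apply: val_inj.
have := congr1 (fun s => nth (val x0) s i) e.
rewrite (nth_map x0) ?sz // => ->.
by rewrite -map_comp (nth_map i) ?size_enum_ord // nth_ord_enum.
Qed.

Definition enumf (M k : nat) (x0 : 'I_M) (S : {set 'I_M}) : 'I_k -> 'I_M :=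
  fun i => nth x0 (enum S) i.
Arguments enumf {M} k x0 S.

Lemma enumf_incr (M k : nat) (x0 : 'I_M) (S : {set 'I_M}) : #|S| = k -> incrf (enumf k x0 S).
Proof. by move=> hS i j ij; apply: nth_enum_lt => //; rewrite hS. Qed.

Lemma incr_idxP (m N : nat) (f : {ffun 'I_m -> 'I_N}) : reflect (incrf f) (incr_idx f).
Proof.
apply: (iffP forallP) => [h i j ij|h i]; first by have /forallP/(_ j)/implyP := h i; apply.
by apply/forallP => j; apply/implyP; exact: h.
Qed.

Lemma gmean_sets (T : Type) (R : realType) (N m M : nat) (x0 : 'I_M) (y0 : 'I_N)
  (W : {set 'I_M}) (v : m.-tuple T -> R) (x : M.-tuple T) : #|W| = N ->
  \sum_(f : {ffun 'I_m -> 'I_N} | incr_idx f) v [tuple tnth (subt (enumf N x0 W) x) (f i) | i < m]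
  = \sum_(S : {set 'I_M} | (S \subset W) && (#|S| == m)) v (subt (enumf m x0 S) x).
Proof.
move=> hW.
pose gW := enumf N x0 W.
have gWincr : incrf gW by exact: enumf_incr.
have szW : size (enum W) = N by rewrite -cardE.
pose phi (f : {ffun 'I_m -> 'I_N}) := [set gW (f i) | i : 'I_m].
pose psi (S : {set 'I_M}) : {ffun 'I_m -> 'I_N} :=
  [ffun i => insubd y0 (index (enumf m x0 S i) (enum W))].
have psi_val : forall (S : {set 'I_M}) (i : 'I_m), S \subset W -> #|S| = m ->
    val (psi S i) = index (enumf m x0 S i) (enum W).
  move=> S i SW hS; rewrite ffunE val_insubd.
  have -> // : (index (enumf m x0 S i) (enum W) < N)%N.
  rewrite -szW index_mem mem_enum.
  by rewrite (fintype.subsetP SW) // -mem_enum mem_nth // -cardE hS.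
have gW_psi : forall (S : {set 'I_M}) (i : 'I_m), S \subset W -> #|S| = m -> gW (psi S i) = enumf m x0 S i.
  move=> S i SW hS; rewrite /gW /enumf -[X in nth _ _ X]/(val (psi S i)) psi_val //.
  rewrite nth_index // mem_enum (fintype.subsetP SW) // -mem_enum mem_nth // -cardE hS //.
rewrite [RHS](reindex_onto phi psi) /=; last first.
  move=> S /andP[SW /eqP hS]; apply/setP => y; apply/imsetP/idP => [[j _ ->]|yS].
    by rewrite gW_psi // /enumf -mem_enum mem_nth // -cardE hS.
  have yi : (index y (enum S) < m)%N by rewrite -hS cardE index_mem mem_enum.
  exists (Ordinal yi) => //; rewrite gW_psi // /enumf /= nth_index // mem_enum //.
apply: eq_big => f.
  apply/idP/idP => [/incr_idxP hf|].
    have hcomp : incrf (fun i => gW (f i)) by move=> i j ij; apply: gWincr; exact: hf.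
    have nthphi : forall i, enumf m x0 (phi f) i = gW (f i) := nth_enum_image x0 hcomp.
    apply/andP; split; first (apply/andP; split).
    - apply/fintype.subsetP => y /imsetP [i _ ->].
      by rewrite /gW /enumf -mem_enum mem_nth // szW.
    - by rewrite card_imset ?card_ord //; exact: incr_inj.
    - apply/eqP/ffunP => i; apply: val_inj.
      rewrite psi_val //; last by rewrite card_imset ?card_ord //; exact: incr_inj.
        by rewrite nthphi /gW /enumf index_uniq ?szW ?enum_uniq.
      apply/fintype.subsetP => y /imsetP [i' _ ->].
      by rewrite /gW /enumf -mem_enum mem_nth // szW.
  move=> /andP [/andP [SW /eqP hS] /eqP hpsi]; apply/incr_idxP; rewrite -hpsi => i j ij.
  rewrite !psi_val //; apply: index_enum_lt.
  - by rewrite (fintype.subsetP SW) // -mem_enum mem_nth // -cardE hS.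
  - by rewrite (fintype.subsetP SW) // -mem_enum mem_nth // -cardE hS.
  - by apply: nth_enum_lt => //; rewrite hS.
move=> /incr_idxP hf.
have hcomp : incrf (fun i => gW (f i)) by move=> i j ij; apply: gWincr; exact: hf.
have nthphi : forall i, enumf m x0 (phi f) i = gW (f i) := nth_enum_image x0 hcomp.
congr v; apply: eq_from_tnth => i; by rewrite /subt !tnth_map !tnth_ord_tuple nthphi.
Qed.

Lemma ae_sub' d (T : measurableType d) (R : realType) (mu : {measure set T -> \bar R})
  (mu_sfin : sigma_finite [set: T] mu) (k M : nat) (P : k.-tuple T -> Prop)
  (g : 'I_k -> 'I_M) :
  ae_prod mu P -> incrf g -> (k <= M)%N -> ae_prod mu (fun x => P (subt g x)).
Proof.
move=> hP hg hkM.
suff H : forall dd M', M' = (dd + k)%N -> forall g' : 'I_k -> 'I_M', incrf g' ->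
    ae_prod mu (fun x => P (subt g' x)).
  exact: (H (M - k)%N M (esym (subnK hkM)) g hg).
by move=> dd M' -> g' hg'; exact: ae_sub.
Qed.

Definition pre (K m : nat) : 'I_m -> 'I_(K + m) := fun i => widen_ord (leq_addl K m) i.
Arguments pre : clear implicits.

Lemma ae_prefix d (T : measurableType d) (R : realType) (mu : {measure set T -> \bar R})
  (mu_nz : mu [set: T] != 0%E) (m : nat) : (0 < m)%N ->
  forall K (Q : m.-tuple T -> Prop),
  ae_prod mu (fun x : (K + m).-tuple T => Q (subt (pre K m) x)) -> ae_prod mu Q.
Proof.
move=> m0; elim=> [|K IH] Q h.
  eapply ae_mono; first exact h.
  move=> x; congr Q; apply: eq_from_tnth => i.
  by rewrite /subt tnth_map tnth_ord_tuple; congr tnth; apply: val_inj.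
apply: IH.
apply: (@ae_droplast _ _ _ mu mu_nz (K + m) (fun y => Q (subt (pre K m) y))).
  by rewrite addn_gt0 m0 orbT.
eapply ae_mono; first exact h.
move=> x; congr Q; apply: eq_from_tnth => i.
rewrite /subt /del !tnth_map !tnth_ord_tuple; congr tnth; apply: val_inj.
rewrite /= /bump.
have : (i < K + m)%N := leq_trans (ltn_ord i) (leq_addl K m).
by rewrite ltnNge => /negbTE ->.
Qed.

Lemma cvg_sum_to (R : realType) (I : Type) (r : seq I) (P : pred I) (f : I -> nat -> R) (l : I -> R) :
  (forall i, P i -> f i @ \oo --> l i) ->
  (fun n => \sum_(i <- r | P i) f i n) @ \oo --> \sum_(i <- r | P i) l i.
Proof.
move=> h; elim: r => [|i r IH].
  rewrite big_nil; under eq_fun do rewrite big_nil; exact: cvg_cst.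
rewrite big_cons; under eq_fun do rewrite big_cons.
case Pi: (P i) => //.
exact: (cvgD (h i Pi) IH).
Qed.

Theorem theorem1 (d : measure_display) (T : measurableType d) (R : realType)
  (mu : {measure set T -> \bar R})
  (mu_complete : measure_is_complete mu)
  (mu_sfin : sigma_finite [set: T] mu)
  (mu_nz : mu [set: T] != 0%E)
  (m N : nat) (hm : (1 <= m)%N) (hmN : (m <= N)%N)
  (u : nat -> m.-tuple T -> R) :
  (exists U : N.-tuple T -> R,
     ae_prod mu (fun x : N.-tuple T => (fun n => Gmean (u n) x) @ \oo --> U x))
  <->
  (exists v : m.-tuple T -> R,
     ae_prod mu (fun y : m.-tuple T => (fun n => u n y) @ \oo --> v y)).
Proof.
have N0 : (0 < N)%N := leq_trans hm hmN.
split.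
- move=> [U hU].
  have hCv : ae_prod mu (fun x : N.-tuple T => Cv (fun n => Gmean (u n) x)).
    by eapply ae_mono; first exact hU; move=> x hx; apply: cvgP hx.
  have M0 : (0 < N + m)%N by rewrite addn_gt0 N0.
  pose x0 : 'I_(N + m) := Ordinal M0.
  pose y0 : 'I_N := Ordinal N0.
  have step1 : ae_prod mu (fun x : (N + m).-tuple T => forall W : {set 'I_(N + m)},
      #|W| = N -> Cv (fun n => Gmean (u n) (subt (enumf N x0 W) x))).
    apply: ae_all => // W.
    case: (boolP (#|W| == N)) => [/eqP hW|hW].
      eapply ae_mono; first exact: (ae_sub' mu_sfin hCv (enumf_incr x0 hW) (leq_addr m N)).
      by move=> x h _.
    eapply ae_mono; first exact: (ae_true mu M0).
    by move=> x _ hW'; move: hW; rewrite hW' eqxx.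
  have step2 : ae_prod mu (fun x : (N + m).-tuple T => Cv (fun n => u n (subt (pre N m) x))).
    eapply ae_mono; first exact step1.
    move=> x hx.
    pose a (S : {set 'I_(N + m)}) (n : nat) := u n (subt (enumf m x0 S) x).
    have hC : ('C(N, m)%:R : R) != 0 by rewrite pnatr_eq0 -lt0n bin_gt0.
    pose DD : {set 'I_(N + m)} := finset.setT.
    have hyp : forall W : {set 'I_(N + m)}, W \subset DD -> #|W| = N ->
        Cv (fun n => \sum_(S : {set 'I_(N + m)} | (S \subset W) && (#|S| == m)) a S n).
      move=> W _ hW.
      apply: (@Cv_ext _ (fun n => 'C(N, m)%:R * Gmean (u n) (subt (enumf N x0 W) x))).
        move=> n; rewrite /Gmean mulrA mulfV // mul1r.
        exact: (gmean_sets x0 y0 (u n) x hW).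
      by apply: Cv_scale; exact: hx.
    have hpre : incrf (pre N m) by move=> i j ij.
    have hS0 : #|[set pre N m i | i : 'I_m]| = m.
      by rewrite card_imset ?card_ord //; exact: incr_inj.
    have hD : (m + N <= #|DD|)%N by rewrite /DD cardsT card_ord addnC.
    have := @alg_inj R _ N m DD a hmN hD hyp _ (finset.subsetT _) hS0.
    apply: Cv_ext => n; rewrite /a; congr (u n); apply: eq_from_tnth => i.
    by rewrite /subt !tnth_map !tnth_ord_tuple /enumf (nth_enum_image x0 hpre).
  have step3 := @ae_prefix _ _ _ mu mu_nz m hm N (fun y => Cv (fun n => u n y)) step2.
  exists (fun y => lim ((fun n => u n y) @ \oo)).
  by eapply ae_mono; first exact step3; move=> y h.
- move=> [v hv].
  have hall : ae_prod mu (fun x : N.-tuple T => forall f : {ffun 'I_m -> 'I_N}, incr_idx f ->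
      (fun n => u n (subt f x)) @ \oo --> v (subt f x)).
    apply: ae_all => // f.
    case: (boolP (incr_idx f)) => [/incr_idxP hf|hf].
      eapply ae_mono; first exact: (ae_sub' mu_sfin hv hf hmN).
      by move=> x h _.
    eapply ae_mono; first exact: (ae_true mu N0).
    by move=> x _.
  exists (Gmean v).
  eapply ae_mono; first exact hall.
  move=> x hx; rewrite /Gmean.
  apply: (cvgM (cvg_cst _)).
  by apply: cvg_sum_to => f hf; exact: hx.
Qed.
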